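(* Let $3\le h\le n-1$. The distance characteristic polynomial of $K^{h}_{n}$ is $$P_D(\lambda)=(\lambda+1)^{h-2}(\lambda+2)^{n-h-1}\bigl[\lambda^{3}+(h+4-2n)\lambda^{2}+(5-2h-2nh+2h^{2}-n)\lambda-nh+h^{2}-2h+2\bigr].$$ Moreover, if $\lambda_1\ge\lambda_2\ge\cdots\ge\lambda_n$ is the distance spectrum of $K^{h}_{n}$, then $\lambda_1>0$, $-1<\lambda_2<-\frac12$, $\lambda_3=-1$, $\lambda_{n-1}\in\{-1,-2\}$ and $\lambda_n<-2$.
   Context: For a connected graph $G$, the distance matrix $D(G)$ has as $(i,j)$-entry the distance between the $i$-th and $j$-th vertices; the distance characteristic polynomial is $P_D(\lambda)=\det(\lambda I-D(G))$ and the distance spectrum consists of the eigenvalues of $D(G)$. $K^{h}_{n}$ denotes the graph on $n$ vertices obtained from the complete graph $K_h$ by attaching $n-h$ pendant edges to one vertex of $K_h$. *)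

(* Defs.v *)
From HB Require Import structures.
From mathcomp Require Import all_boot all_order all_algebra.
Set Implicit Arguments. Unset Strict Implicit. Unset Printing Implicit Defensive.
Import Order.TTheory GRing.Theory Num.Theory.
Local Open Scope ring_scope.

(* A (simple) graph on a finite vertex type T is given by its adjacency
   relation e (symmetric, irreflexive). *)

Definition walk_of_length (T : finType) (e : rel T) (k : nat) (x y : T) : bool :=
  [exists p : k.-tuple T, path e x p && (last x p == y)].

(* Graph distance: the least k such that a walk of length k from x to y exists
   (searched among k < #|T|, which suffices for any pair of connected vertices,
   since a shortest walk is a path with at most #|T|-1 edges). *)
Definition gdist (T : finType) (e : rel T) (x y : T) : nat :=
  find (fun k => walk_of_length e k x y) (iota 0 #|T|).

Definition dist_matrix (R : nzRingType) (n : nat) (e : rel 'I_n) : 'M[R]_n :=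
  \matrix_(i, j) (gdist e i j)%:R.

(* K^h_n on vertex set {0,...,n-1}: vertices 0,...,h-1 form K_h, and the
   vertices h,...,n-1 are pendant vertices attached to vertex 0. *)
Definition Khn_adj (n h : nat) : rel 'I_n :=
  fun i j => (i != j) &&
    [|| ((i < h)%N && (j < h)%N),
        ((nat_of_ord i == 0%N) && (h <= j)%N)
      | ((nat_of_ord j == 0%N) && (h <= i)%N)].

Arguments dist_matrix R n e : clear implicits.
Arguments Khn_adj n h : clear implicits.

(* Main.v *)
Require Import Defs.
From HB Require Import structures.
From mathcomp Require Import all_boot all_order all_algebra.
From mathcomp Require Import ring lra zify.
From mathcomp.real_closed Require Import polyrcf.
Import Order.TTheory GRing.Theory Num.Theory.
Set Implicit Arguments. Unset Strict Implicit. Unset Printing Implicit Defensive.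
Local Open Scope ring_scope.

Lemma walk0 (T : finType) (e : rel T) x y : walk_of_length e 0 x y = (x == y).
Proof.
apply/existsP/idP => [[p]|/eqP ->]; first by rewrite (tuple0 p).
by exists [tuple]; rewrite /= eqxx.

Qed.

Lemma walk1 (T : finType) (e : rel T) x y : walk_of_length e 1 x y = e x y.
Proof.
apply/existsP/idP => [[p]|exy].
  by case/tupleP: p => a t; rewrite (tuple0 t) /= andbT => /andP[H /eqP <-].
by exists [tuple y]; rewrite /= exy eqxx.

Qed.

Lemma walk2 (T : finType) (e : rel T) x y z : e x z -> e z y -> walk_of_length e 2 x y.
Proof. by move=> h1 h2; apply/existsP; exists [tuple z; y]; rewrite /= h1 h2 eqxx. Qed.

Lemma gdist_small (T : finType) (e : rel T) x y : (2 < #|T|)%N ->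
  (x != y -> ~~ e x y -> exists z, e x z && e z y) ->
  gdist e x y = if x == y then 0%N else if e x y then 1%N else 2%N.
Proof.
rewrite /gdist => + H; case: #|T| => [|[|[|m]]] // _ /=.
rewrite walk0 walk1; case: eqP => [//|/eqP xy]; case exy: (e x y) => //.
have [z /andP[h1 h2]] := H xy (negbT exy).
by rewrite (walk2 h1 h2).

Qed.
Definition catn (h i : nat) : nat := if i == 0%N then 0%N else if (i < h)%N then 1%N else 2%N.

Lemma sum_cat (R : nzRingType) n h (F : nat -> R) : (1 <= h <= n)%N ->
  \sum_(i < n) F (catn h i) = F 0%N + F 1%N *+ (h - 1) + F 2%N *+ (n - h).
Proof.
move=> /andP[h1 hn].
rewrite -(big_mkord xpredT (fun i => F (catn h i))).
rewrite (@big_cat_nat _ _ _ 1 0 n) ?(leq_trans h1 hn) //= big_nat1.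
rewrite (@big_cat_nat _ _ _ h 1 n) // /= -addrA; congr (_ + (_ + _)).
  rewrite (eq_big_nat _ _ (F2 := fun _ => F 1%N)) ?sumr_const_nat //.
  by move=> i /andP[i1 ih]; rewrite /catn ih; have -> : (i == 0%N) = false by lia.
rewrite (eq_big_nat _ _ (F2 := fun _ => F 2%N)) ?sumr_const_nat //.
move=> i /andP[i1 ih]; rewrite /catn; have -> : (i == 0%N) = false by lia. by have -> : (i < h)%N = false by lia.

Qed.

Lemma prod_cat (R : comNzRingType) n h (F : nat -> R) : (1 <= h <= n)%N ->
  \prod_(i < n) F (catn h i) = F 0%N * F 1%N ^+ (h - 1) * F 2%N ^+ (n - h).
Proof.
move=> /andP[h1 hn].
rewrite -(big_mkord xpredT (fun i => F (catn h i))).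
rewrite (@big_cat_nat _ _ _ 1 0 n) ?(leq_trans h1 hn) //= big_nat1.
rewrite (@big_cat_nat _ _ _ h 1 n) // /= -mulrA; congr (_ * (_ * _)).
  rewrite (eq_big_nat _ _ (F2 := fun _ => F 1%N)) ?prodr_const_nat //.
  by move=> i /andP[i1 ih]; rewrite /catn ih; have -> : (i == 0%N) = false by lia.
rewrite (eq_big_nat _ _ (F2 := fun _ => F 2%N)) ?prodr_const_nat //.
move=> i /andP[i1 ih]; rewrite /catn; have -> : (i == 0%N) = false by lia.
by have -> : (i < h)%N = false by lia.

Qed.

Definition Cn (R : nzRingType) (k l : nat) : R :=
  if (k == 0%N) && (l == 0%N) then 0 else
  if (k == 0%N) || (l == 0%N) || ((k == 1%N) && (l == 1%N)) then -1 else -2.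

Lemma Dentry (R : nzRingType) n h (i j : 'I_n) : (3 <= h)%N -> (h < n)%N ->
  dist_matrix R n (Khn_adj n h) i j = if i == j then 0 else - Cn R (catn h i) (catn h j).
Proof.
move=> h3 hn; rewrite mxE gdist_small ?card_ord; last 2 first.
- lia.
- move=> ij nadj; have n0 : (0 < n)%N by lia.
  exists (Ordinal n0); move: ij nadj; rewrite /Khn_adj /= -!val_eqE /=.
  case: i j => [a Ha] [b Hb] /=; lia.
have [ij|ij] := eqVneq i j => //.
move: ij; rewrite /Khn_adj /Cn /catn -!val_eqE /=.
case: i j => [a Ha] [b Hb] /= ab; rewrite ab /=.
have [a0|a0] := eqVneq a 0%N; have [b0|b0] := eqVneq b 0%N;
have [ah|ah] := ltnP a h; have [bh|bh] := ltnP b h => /=; try lia.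
all: by rewrite opprK.
Qed.
Lemma det3 (R : comNzRingType) (f : nat -> nat -> R) :
  \det (\matrix_(i < 3, j < 3) f i j) =
    f 0%N 0%N * (f 1%N 1%N * f 2%N 2%N - f 1%N 2%N * f 2%N 1%N)
  - f 0%N 1%N * (f 1%N 0%N * f 2%N 2%N - f 1%N 2%N * f 2%N 0%N)
  + f 0%N 2%N * (f 1%N 0%N * f 2%N 1%N - f 1%N 1%N * f 2%N 0%N).
Proof.
rewrite (expand_det_row _ ord0) !big_ord_recl big_ord0 /cofactor.
rewrite !(expand_det_row _ ord0) !big_ord_recl !big_ord0 /cofactor !det_mx11 !mxE /bump /=.
rewrite !expr0 !expr1 !exprS !expr0. ring.
Qed.
Lemma det_1_mulmx (R : comNzRingType) m k (A : 'M[R]_(m,k)) (B : 'M[R]_(k,m)) :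
  \det (1%:M + A *m B) = \det (1%:M + B *m A).
Proof.
have e1 : block_mx 1%:M A 0 1%:M *m block_mx 1%:M (- A) B 1%:M
          = block_mx (1%:M + A *m B) 0 B 1%:M.
  rewrite mulmx_block !mul1mx !mul0mx !mulmx1.
  by rewrite addNr !add0r.
have e2 : block_mx 1%:M 0 (- B) 1%:M *m block_mx 1%:M (- A) B 1%:M
          = block_mx 1%:M (- A) 0 (1%:M + B *m A).
  rewrite mulmx_block !mul1mx !mul0mx !mulmx1.
  by rewrite !addr0 addNr mulNmx mulmxN opprK addrC.
have d1 : \det (block_mx 1%:M A 0 1%:M) = 1 by rewrite det_ublock !det1 mulr1.
have d2 : \det (block_mx (1%:M + A *m B) 0 B (1%:M : 'M[R]_k)) = \det (1%:M + A *m B).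
  by rewrite det_lblock det1 mulr1.
have d3 : \det (block_mx (1%:M : 'M[R]_m) 0 (- B) 1%:M) = 1 by rewrite det_lblock !det1 mulr1.
have d4 : \det (block_mx (1%:M : 'M[R]_m) (- A) 0 (1%:M + B *m A)) = \det (1%:M + B *m A).
  by rewrite det_ublock det1 mul1r.
have := congr1 determinant e1; have := congr1 determinant e2.
by rewrite !det_mulmx d1 d2 d3 d4 !mul1r => -> ->.
Qed.

Lemma catn_lt3 h i : (catn h i < 3)%N.
Proof. by rewrite /catn; case: ifP => //; case: ifP. Qed.

Lemma sum_sel_l (R : nzRingType) (w : nat -> R) c : (c < 3)%N ->
  \sum_(k < 3) (c == k)%:R * w k = w c.
Proof.
rewrite !big_ord_recl big_ord0 /bump /=.
by case: c => [|[|[|]]] // _; rewrite /= ?mul1r ?mul0r ?add0r ?addr0.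
Qed.

Lemma sum_sel_r (R : nzRingType) (w : nat -> R) c : (c < 3)%N ->
  \sum_(k < 3) w k * (c == k)%:R = w c.
Proof.
rewrite !big_ord_recl big_ord0 /bump /=.
by case: c => [|[|[|]]] // _; rewrite /= ?mulr1 ?mulr0 ?add0r ?addr0.
Qed.

Lemma char_poly_eval (R : comNzRingType) n (A : 'M[R]_n) x :
  (char_poly A).[x] = \det (x%:M - A).
Proof.
rewrite /char_poly -horner_evalE -det_map_mx; congr (\det _).
apply/matrixP => i j; rewrite !mxE rmorphB /= rmorphMn /= !horner_evalE hornerX hornerC.
by [].
Qed.

Section DetComp.
Variables (R : numFieldType) (n h : nat) (x : R).
Hypotheses (h3 : (3 <= h)%N) (hn : (h < n)%N) (x0 : 0 < x).

Let dv : 'rV[R]_n := \row_(i < n) (x + (catn h i)%:R).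
Let dvi : 'rV[R]_n := \row_(i < n) (x + (catn h i)%:R)^-1.
Let U : 'M[R]_(n,3) := \matrix_(i, k) ((catn h i == k)%:R).
Let Cm : 'M[R]_3 := \matrix_(k, l) Cn R k l.
Let B := Cm *m U^T.

Lemma dpos c : 0 < x + c%:R.
Proof. by rewrite ltr_pwDl. Qed.

Lemma stepA : x%:M - dist_matrix R n (Khn_adj n h) = diag_mx dv + U *m B.
Proof.
apply/matrixP => i j; rewrite [LHS]mxE [X in x%:M i j + X]mxE Dentry // !mxE.
have -> : \sum_k U i k * B k j = Cn R (catn h i) (catn h j).
  under eq_bigr => k _ do rewrite !mxE.
  under eq_bigr => k _ do under eq_bigr => l _ do rewrite !mxE.
  under eq_bigr => k _ do rewrite (sum_sel_r (fun l => Cn R k l)) ?catn_lt3 //.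
  by rewrite (sum_sel_l (fun k => Cn R k (catn h j))) ?catn_lt3.
have [->|ij] := eqVneq i j; last by rewrite !mulr0n opprK !add0r.
rewrite !mulr1n subr0 /Cn /catn.
by case: ifP => _ /=; [|case: ifP => _ /=]; rewrite ?addr0 ?addrK //.
Qed.

Lemma stepB : \det (x%:M - dist_matrix R n (Khn_adj n h)) =
  \det (diag_mx dv) * \det (1%:M + B *m (diag_mx dvi *m U)).
Proof.
rewrite stepA.
have e : diag_mx dv + U *m B = diag_mx dv *m (1%:M + (diag_mx dvi *m U) *m B).
  rewrite mulmxDr mulmx1 !mulmxA mulmx_diag.
  have -> : \row_j (dv 0 j * dvi 0 j) = const_mx 1.
    by apply/rowP => j; rewrite !mxE mulfV // gt_eqF // dpos.
  by rewrite diag_const_mx mul1mx.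
by rewrite e det_mulmx det_1_mulmx.
Qed.

Lemma stepC : \det (diag_mx dv) = x * (x + 1) ^+ (h - 1) * (x + 2) ^+ (n - h).
Proof.
rewrite det_diag; under eq_bigr do rewrite mxE.
rewrite (prod_cat (fun c => x + c%:R)) ?addr0 //.
apply/andP; split; lia.
Qed.

Definition ee (k l : nat) : R := (k == l)%:R +
  (Cn R k 0 * ((x + 0%:R)^-1 * (0 == l)%:R) + Cn R k 1 * ((x + 1%:R)^-1 * (1 == l)%:R) *+ (h - 1)
   + Cn R k 2 * ((x + 2%:R)^-1 * (2 == l)%:R) *+ (n - h)).

Lemma stepD : 1%:M + B *m (diag_mx dvi *m U) = \matrix_(k < 3, l < 3) ee k l.
Proof.
apply/matrixP => k l; rewrite !mxE mul_diag_mx.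
under eq_bigr => i _ do rewrite !mxE.
under eq_bigr => i _ do under eq_bigr => m _ do rewrite !mxE.
under eq_bigr => i _ do rewrite (sum_sel_r (fun m => Cn R k m)) ?catn_lt3 //.
rewrite (sum_cat (fun c => Cn R k c * ((x + c%:R)^-1 * (c == l)%:R))) //.
apply/andP; split; lia.
Qed.

Lemma det_final : \det (x%:M - dist_matrix R n (Khn_adj n h)) =
  (x + 1) ^+ (h - 2) * (x + 2) ^+ (n - h - 1) *
  (x ^+ 3 + (h%:R + 4 - 2 * n%:R) * x ^+ 2
   + (5 - 2 * h%:R - 2 * n%:R * h%:R + 2 * h%:R ^+ 2 - n%:R) * x
   + (- (n%:R * h%:R) + h%:R ^+ 2 - 2 * h%:R + 2)).
Proof.
rewrite stepB stepC stepD det3 /ee /Cn /=.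
rewrite !mulr0 !mulr1 !mul0r ?mul0rn !addr0 !add0r.
have H1 : forall y : R, y *+ (h - 1) = y * (h%:R - 1).
  move=> y; have e : (1 <= h)%N by lia.
  by rewrite -(natrB R e) mulr_natr.
have H2 : forall y : R, y *+ (n - h) = y * (n%:R - h%:R).
  move=> y; have e : (h <= n)%N by lia.
  by rewrite -(natrB R e) mulr_natr.
rewrite !H1 !H2.
have ea : (x + 1) ^+ (h - 1) = (x + 1) * (x + 1) ^+ (h - 2).
  by rewrite -exprS; congr (_ ^+ _); lia.
have eb : (x + 2) ^+ (n - h) = (x + 2) * (x + 2) ^+ (n - h - 1).
  by rewrite -exprS; congr (_ ^+ _); lia.
rewrite ea eb.
move: ((x + 1) ^+ (h - 2)) ((x + 2) ^+ (n - h - 1)) => a b.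
have := dpos 0; have := dpos 1; have := dpos 2; rewrite addr0 => p2 p1 p0.
field.
by rewrite !gt_eqF.
Qed.

End DetComp.

Lemma size_cub (R : nzRingType) (a b c : R) :
  (size ('X ^+ 3 + a *: 'X ^+ 2 + b *: 'X + c%:P)%R <= 4)%N.
Proof.
have s1 : (size ('X ^+ 3 : {poly R}) <= 4)%N by rewrite size_polyXn.
have s2 : (size (a *: 'X ^+ 2) <= 4)%N by rewrite (leq_trans (size_scale_leq _ _)) // size_polyXn.
have s3 : (size (b *: 'X) <= 4)%N by rewrite (leq_trans (size_scale_leq _ _)) // size_polyX.
have s4 : (size c%:P <= 4)%N by rewrite (leq_trans (size_polyC_leq1 _)).
apply: (leq_trans (size_polyD _ _)); rewrite geq_max s4 andbT.
apply: (leq_trans (size_polyD _ _)); rewrite geq_max s3 andbT.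
by apply: (leq_trans (size_polyD _ _)); rewrite geq_max s1 s2.
Qed.

Lemma part1 (R : numFieldType) (n h : nat) (h3 : (3 <= h)%N) (hn : (h <= n - 1)%N) :
  char_poly (dist_matrix R n (Khn_adj n h)) =
    ('X + 1) ^+ (h - 2)%N * ('X + 2%:P) ^+ (n - h - 1)%N *
    ('X ^+ 3 + (h%:R + 4 - 2 * n%:R) *: 'X ^+ 2
     + (5 - 2 * h%:R - 2 * n%:R * h%:R + 2 * h%:R ^+ 2 - n%:R) *: 'X
     + (- (n%:R * h%:R) + h%:R ^+ 2 - 2 * h%:R + 2)%:P).
Proof.
have hn' : (h < n)%N by lia.
apply/eqP; rewrite -subr_eq0; apply/negPn/negP => nz.
pose rs := [seq (i.+1)%:R : R | i <- iota 0 n.+1].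
have := max_poly_roots nz (rs := rs).
have -> : all (root (char_poly (dist_matrix R n (Khn_adj n h)) -
    ('X + 1) ^+ (h - 2)%N * ('X + 2%:P) ^+ (n - h - 1)%N *
    ('X ^+ 3 + (h%:R + 4 - 2 * n%:R) *: 'X ^+ 2
     + (5 - 2 * h%:R - 2 * n%:R * h%:R + 2 * h%:R ^+ 2 - n%:R) *: 'X
     + (- (n%:R * h%:R) + h%:R ^+ 2 - 2 * h%:R + 2)%:P))) rs.
  apply/allP => y /mapP [i _ ->]; rewrite /root hornerD hornerN char_poly_eval.
  rewrite det_final ?ltr0Sn // -polyC1.
  rewrite !(hornerD, hornerM, horner_exp, hornerZ, hornerX, hornerC, hornerXn).
  by rewrite subr_eq0.
have -> : uniq rs.
  by rewrite map_inj_uniq ?iota_uniq // => i j /eqP; rewrite eqr_nat => /eqP [].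
move=> /(_ isT isT); rewrite size_map size_iota.
apply/negP; rewrite -leqNgt.
apply: (leq_trans (size_polyD _ _)); rewrite size_polyN geq_max size_char_poly leqnn /=.
apply: (leq_trans (size_polyMleq _ _)).
have sA : (size (('X + 1 : {poly R}) ^+ (h - 2))%R <= (h - 2).+1)%N.
  apply: leq_trans (size_poly_exp_leq _ _) _.
  by rewrite -[1 : {poly R}]polyC1 size_XaddC mul1n.
have sB : (size (('X + 2%:P : {poly R}) ^+ (n - h - 1))%R <= (n - h - 1).+1)%N.
  apply: leq_trans (size_poly_exp_leq _ _) _.
  by rewrite size_XaddC mul1n.
have sAB : (size ((('X + 1 : {poly R}) ^+ (h - 2)) * ('X + 2%:P) ^+ (n - h - 1))%R <= (h - 2) + (n - h - 1) + 1)%N.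
  by apply: (leq_trans (size_polyMleq _ _)); move: sA sB; lia.
have sC := (size_cub (R:=R) (h%:R + 4 - 2 * n%:R) (5 - 2 * h%:R - 2 * n%:R * h%:R + 2 * h%:R ^+ 2 - n%:R)
  (- (n%:R * h%:R) + h%:R ^+ 2 - 2 * h%:R + 2)).
have H := leq_add sAB sC; move: H.
set a := size _. set b := size _. lia.
Qed.
Definition cub (R : nzRingType) (a b c : R) : {poly R} :=
  'X ^+ 3 + a *: 'X ^+ 2 + b *: 'X + c%:P.

Lemma cub_size_lead (R : nzRingType) (a b c : R) :
  size (cub a b c) = 4%N /\ lead_coef (cub a b c) = 1.
Proof.
have s2 : (size (a *: 'X ^+ 2 : {poly R}) < 4)%N by rewrite (leq_ltn_trans (size_scale_leq _ _)) // size_polyXn.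
have s3 : (size (b *: 'X : {poly R}) < 4)%N by rewrite (leq_ltn_trans (size_scale_leq _ _)) // size_polyX.
have s4 : (size (c%:P : {poly R}) < 4)%N by rewrite (leq_ltn_trans (size_polyC_leq1 _)).
have s : (size (a *: 'X ^+ 2 + (b *: 'X + c%:P) : {poly R})%R < 4)%N.
  apply: (leq_ltn_trans (size_polyD _ _)); rewrite gtn_max s2 /=.
  by apply: (leq_ltn_trans (size_polyD _ _)); rewrite gtn_max s3 s4.
rewrite /cub -!addrA; split.
  by rewrite size_polyDl size_polyXn.
by rewrite lead_coefDl ?lead_coefXn // size_polyXn.
Qed.

Lemma cub_horner (R : comNzRingType) (a b c x : R) :
  (cub a b c).[x] = x ^+ 3 + a * x ^+ 2 + b * x + c.
Proof. by rewrite /cub !(hornerD, hornerZ, hornerXn, hornerX, hornerC). Qed.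

Lemma cubic_roots (R : rcfType) (c2 c1 c0 : R) :
  0 < (cub c2 c1 c0).[-2] -> 0 < (cub c2 c1 c0).[-1] ->
  (cub c2 c1 c0).[-(1/2)] < 0 -> (cub c2 c1 c0).[0] < 0 ->
  exists a b c, [/\ 0 < a, -1 < b < -(1/2), c < -2 &
    cub c2 c1 c0 = \prod_(z <- [:: a; b; c]) ('X - z%:P)].
Proof.
set q := cub c2 c1 c0 => q2 q1 q12 q0.
have [sq lq] := cub_size_lead c2 c1 c0; rewrite -/q in sq lq.
have lq0 : 0 < lead_coef q by rewrite lq ltr01.
have [N1 HN1] := poly_pinfty_gt_lc lq0.
pose U := Num.max N1 1.
have qU : 1 <= q.[U] by rewrite -lq; apply: HN1; rewrite le_max lexx.
have U1 : 1 <= U by rewrite le_max lexx orbT.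
have [a ha ra] : {x | x \in `]0, U[ & root q x}.
  apply: poly_ivtoo; first by lra.
  by rewrite pmulr_llt0 //; lra.
set r := cub (- c2) c1 (- c0).
have [sr lr] := cub_size_lead (- c2) c1 (- c0); rewrite -/r in sr lr.
have rq : forall t, r.[t] = - q.[- t].
  by move=> t; rewrite /r /q !cub_horner; ring.
have lr0 : 0 < lead_coef r by rewrite lr ltr01.
have [N2 HN2] := poly_pinfty_gt_lc lr0.
pose V := Num.max N2 3.
have rV : 1 <= r.[V] by rewrite -lr; apply: HN2; rewrite le_max lexx.
have V3 : 3 <= V by rewrite le_max lexx orbT.
have qV : q.[- V] <= -1 by move: rV; rewrite rq; lra.
have [c hc rc] : {x | x \in `]- V, -2[ & root q x}.
  apply: poly_ivtoo; first by lra.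
  by rewrite nmulr_rlt0 //; lra.
have [b hb rb] : {x | x \in `]-1, -(1/2)[ & root q x}.
  apply: poly_ivtoo; first by lra.
  by rewrite pmulr_rlt0 //; lra.
move: ha hb hc; rewrite !in_itv /= => /andP[a0 aU] /andP[b1 b2] /andP[cV c2'].
exists a, b, c; split => //; first by rewrite b1 b2.
have dv : (\prod_(z <- [:: a; b; c]) ('X - z%:P)) %| q.
  apply: uniq_roots_dvdp; first by rewrite /= ra rb rc.
  rewrite uniq_rootsE /= !inE !negb_or.
  rewrite !andbT; apply/andP; split; [apply/andP; split|]; apply/negP => /eqP H; lra.
have := dvdp_size_eqp dv; rewrite size_prod_XsubC sq /= eqp_monic ?monic_prod_XsubC //.
  by move/esym/eqP.
by rewrite monicE lq.
Qed.

Lemma path_nseq (T : Type) (r : rel T) x y k : r x y -> r y y -> path r x (nseq k y).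
Proof. by elim: k x => //= k IH x rxy ryy; rewrite rxy IH. Qed.

Lemma last_nseq_same (T : Type) (y : T) j : last y (nseq j y) = y.
Proof. by elim: j. Qed.

Lemma prod_nseq (R : comNzRingType) k (y : R) :
  \prod_(z <- nseq k y) ('X - z%:P) = ('X - y%:P) ^+ k.
Proof. by elim: k => [|k IH]; rewrite ?big_nil //= big_cons IH exprS. Qed.

Lemma assemble (R : rcfType) (n k m : nat) (a b c : R) (s : seq R) :
  n = (k + m + 3)%N -> (1 <= k)%N -> 0 < a -> -1 < b < -(1/2) -> c < -2 ->
  size s = n -> sorted (fun x y => y <= x) s ->
  ('X + 1) ^+ k * ('X + 2%:P) ^+ m * \prod_(z <- [:: a; b; c]) ('X - z%:P)
    = \prod_(x <- s) ('X - x%:P) ->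
  [/\ 0 < s`_0, -1 < s`_1 < -(1/2), s`_2 = -1,
      s`_(n - 2)%N = -1 \/ s`_(n - 2)%N = -2 & s`_(n - 1)%N < -2].
Proof.
move=> -> k1 a0 /andP[b1 b2] c2 _ ss E.
pose L := a :: b :: nseq k (-1) ++ nseq m (-2) ++ [:: c].
have EL : \prod_(x <- s) ('X - x%:P) = \prod_(x <- L) ('X - x%:P).
  rewrite -E /L !big_cons !big_cat /= !prod_nseq !big_cons !big_nil.
  rewrite !polyCN !opprK polyC1. ring.
have sL : sorted (fun x y => y <= x) L.
  rewrite /L /=; apply/andP; split; first lra.
  rewrite cat_path path_nseq //=; try lra.
  rewrite cat_path path_nseq //=; try lra.
  1,2: have [k' ek] : exists k', k = k'.+1 by exists k.-1; lia.
  1,2: rewrite ek /= last_nseq_same; try lra.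
  by case: (posnP m) => [->|m0] /=; [|rewrite -(prednK m0) /=]; rewrite ?last_nseq_same andbT; lra.
have sE : s = L.
  apply: (sorted_eq _ _ ss sL (prod_XsubC_eq EL)).
  - by move=> x y z /= h1 h2; apply: le_trans h2 h1.
  - by move=> x y /andP[h1 h2]; apply/le_anti; rewrite h1 h2.
have nth2 : forall (x y : R) t i, (x :: y :: t)`_i.+2 = t`_i by [].
rewrite sE /L; split.
- by [].
- by rewrite /= b1 b2.
- rewrite nth2 nth_cat size_nseq nth_nseq k1; done.
- have -> : (k + m + 3 - 2 = (k + m - 1).+2)%N by lia.
  rewrite nth2 nth_cat size_nseq nth_nseq.
  case: (posnP m) => [->|m0].
    have -> : (k + 0 - 1 < k)%N by lia.
    by left.
  have -> : (k + m - 1 < k)%N = false by lia.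
  right; rewrite nth_cat size_nseq nth_nseq.
  by have -> : (k + m - 1 - k < m)%N by lia.
- have -> : (k + m + 3 - 1 = (k + m).+2)%N by lia.
  rewrite nth2 nth_cat size_nseq.
  have -> : (k + m < k)%N = false by lia.
  rewrite nth_cat size_nseq.
  have -> : (k + m - k = m)%N by lia.
  by rewrite ltnn subnn.
Qed.

Theorem theorem2p5 (R : rcfType) (n h : nat) (h3 : (3 <= h)%N) (hn : (h <= n - 1)%N) :
  let D := dist_matrix R n (Khn_adj n h) in
  char_poly D =
    ('X + 1) ^+ (h - 2)%N * ('X + 2%:P) ^+ (n - h - 1)%N *
    ('X ^+ 3 + (h%:R + 4 - 2 * n%:R) *: 'X ^+ 2
     + (5 - 2 * h%:R - 2 * n%:R * h%:R + 2 * h%:R ^+ 2 - n%:R) *: 'X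
     + (- (n%:R * h%:R) + h%:R ^+ 2 - 2 * h%:R + 2)%:P)
  /\
  (forall s : seq R,
     size s = n ->
     sorted (fun x y => y <= x) s ->
     char_poly D = \prod_(x <- s) ('X - x%:P) ->
     [/\ 0 < s`_0,
         -1 < s`_1 < -(1/2),
         s`_2 = -1,
         s`_(n - 2)%N = -1 \/ s`_(n - 2)%N = -2
       & s`_(n - 1)%N < -2]).
Proof.
move=> D.
have P1 := @part1 R n h h3 hn.
split; first exact: P1.
move=> s ss sorted_s E.
have hR3 : 3 <= h%:R :> R by rewrite (ler_nat R 3 h).
have hnR : h%:R + 1 <= n%:R :> R.
  have H : (h + 1 <= n)%N by lia.
  by move: H; rewrite -(ler_nat R) natrD.
pose c2 : R := (h%:R + 4 - 2 * n%:R).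
pose c1 : R := (5 - 2 * h%:R - 2 * n%:R * h%:R + 2 * h%:R ^+ 2 - n%:R).
pose c0 : R := (- (n%:R * h%:R) + h%:R ^+ 2 - 2 * h%:R + 2).
have f1 : 0 < (cub c2 c1 c0).[-2] by rewrite cub_horner /c2 /c1 /c0; nra.
have f2 : 0 < (cub c2 c1 c0).[-1] by rewrite cub_horner /c2 /c1 /c0; nra.
have f3 : (cub c2 c1 c0).[-(1/2)] < 0 by rewrite cub_horner /c2 /c1 /c0; nra.
have f4 : (cub c2 c1 c0).[0] < 0 by rewrite cub_horner /c2 /c1 /c0; nra.
have [a [b [c [a0 bI cI Eq]]]] := cubic_roots f1 f2 f3 f4.
apply: (@assemble R n (h - 2) (n - h - 1) a b c s) => //; first lia; first lia.
rewrite -E /D P1 -Eq.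
by [].
Qed.
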